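(* Let $M=p_i^{n_i}p_j^{n_j}p_k^{n_k}$ with distinct primes and $n_i,n_j,n_k\in\mathbb{N}$, let $A\oplus B=\mathbb{Z}_M$ with $\Phi_M(X)\mid A(X)$, assume $A$ is fibered on $D$-grids where $D=M/(p_ip_jp_k)$, and let $\Lambda=\Lambda(z_0,D)$ for some $z_0\in\mathbb{Z}_M$. (i) If there exists $a\in\Sigma_A(\Lambda)\cap\mathcal{I}\cap\mathcal{J}\cap\mathcal{K}$ with $\kappa(a)=i$, then $\kappa(a')=i$ for all $a'\in\Sigma_A(\Lambda)$; in particular $\Sigma_A(\Lambda)\subset\mathcal{I}$. (ii) If $\Sigma_A(\Lambda)\cap\mathcal{I}\cap\mathcal{J}\cap\mathcal{K}=\emptyset$, then there is $S\subset\{i,j,k\}$ with $|S|\le2$ such that $\kappa(a)\in S$ for all $a\in\Sigma_A(\Lambda)$; in particular $\Sigma_A(\Lambda)$ is contained in the union of two of the sets $\mathcal{I},\mathcal{J},\mathcal{K}$. (iii) Assume $\Sigma_A(\Lambda)\cap\mathcal{I}\cap\mathcal{J}\cap\mathcal{K}=\emptyset$ and that (after permuting the indices $i,j,k$ if necessary) $\kappa(a)\in\{i,j\}$ for all $a\in\Sigma_A(\Lambda)$. Let $z_\nu=z_0+\nu M/p_k$ for $\nu=0,1,\dots,p_k-1$. Then for each $\nu$ there is $\lambda(\nu)\in\{i,j\}$ such that $\kappa(a)=\lambda(\nu)$ for all $a\in\Sigma_A(z_\nu*F_i*F_j)$.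
   Context: $A\oplus B=\mathbb{Z}_M$ means every element of $\mathbb{Z}_M$ is uniquely $a+b$, $a\in A$, $b\in B$; $A(X)=\sum_{a\in A}X^a$ ($A$ in $\{0,\dots,M-1\}$), $\Phi_M$ the $M$-th cyclotomic polynomial. For $d\mid M$, $\Lambda(x,d)=\{x'\in\mathbb{Z}_M:d\mid x-x'\}$. For $\nu\in\{i,j,k\}$, $F_\nu=\{0,M/p_\nu,\dots,(p_\nu-1)M/p_\nu\}$; $x*Y=\{x+y:y\in Y\}$ and $X*Y=\{x+y:x\in X,y\in Y\}$. A set $Y$ is fibered in the $p_\nu$ direction if it is a union of sets $y*F_\nu$, $y\in Y$. ''$A$ is fibered on $D$-grids'' means for every $a\in A$, $A\cap\Lambda(a,D)$ is fibered in some direction $p_\nu$. The function $\kappa:A\to\{i,j,k\}$: for each $D$-grid $\Lambda(x,D)$ meeting $A$, fix one direction $\nu(x)$ in which $A\cap\Lambda(x,D)$ is fibered (chosen arbitrarily if several) and set $\kappa(a)=\nu(x)$ for $a\in A\cap\Lambda(x,D)$. $\mathcal{I}=\{a\in A:a*F_i\subset A\}$, $\mathcal{J},\mathcal{K}$ analogously with $F_j,F_k$. For $Z\subset\mathbb{Z}_M$, $\Sigma_A(Z)=\{a\in A:a+b\in Z\text{ for some }b\in B\}$. *)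

(* Defs.v *)
(* Z_M is represented by 'I_M, with arithmetic mod M on
   natural representatives. Directions i,j,k are indexed by 'I_3. *)
From mathcomp Require Import all_boot all_order all_algebra all_field.
Unset Printing Implicit Defensive.
Import GRing.Theory.

Definition tiling (M : nat) (A B : {set 'I_M}) : bool :=
  [forall z : 'I_M,
    #|[set ab : 'I_M * 'I_M | [&& ab.1 \in A, ab.2 \in B &
                               (ab.1 + ab.2) %% M == z]]| == 1].

Definition maskpoly (M : nat) (A : {set 'I_M}) : {poly int} :=
  (\sum_(a in A) 'X^a)%R.

Definition grid (M d : nat) (x : 'I_M) : {set 'I_M} :=
  [set x' : 'I_M | x %% d == x' %% d].

Definition fiber (M p : nat) (x : 'I_M) : {set 'I_M} :=
  [set y : 'I_M | [exists t : 'I_p, val y == (x + t * (M %/ p)) %% M]].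

Definition Fsum (M p : nat) (Y : {set 'I_M}) : {set 'I_M} :=
  [set y : 'I_M | [exists x in Y, y \in fiber M p x]].

Definition fibered (M p : nat) (Y : {set 'I_M}) : bool :=
  [forall y in Y, fiber M p y \subset Y].

Definition fibered_on_grids (M D : nat) (q : 'I_3 -> nat) (A : {set 'I_M}) : Prop :=
  forall a, a \in A -> exists nu : 'I_3, fibered M (q nu) (A :&: grid M D a).

Definition kappa_spec (M D : nat) (q : 'I_3 -> nat) (A : {set 'I_M})
  (kappa : 'I_M -> 'I_3) : Prop :=
  (forall a a', a \in A -> a' \in A -> a' \in grid M D a -> kappa a = kappa a') /\
  (forall a, a \in A -> fibered M (q (kappa a)) (A :&: grid M D a)).

Definition fullfib (M p : nat) (A : {set 'I_M}) : {set 'I_M} :=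
  [set a in A | fiber M p a \subset A].

Definition SigmaA (M : nat) (A B Z : {set 'I_M}) : {set 'I_M} :=
  [set a in A | [exists b in B, [exists z in Z, val z == (a + b) %% M]]].

Definition pt (M x : nat) : {set 'I_M} := [set y : 'I_M | val y == x %% M].

Definition d0 : 'I_3 := @Ordinal 3 0 isT.
Definition d1 : 'I_3 := @Ordinal 3 1 isT.
Definition d2 : 'I_3 := @Ordinal 3 2 isT.

(* Main.v *)
Require Import Defs.
From mathcomp Require Import all_boot all_order all_algebra all_field.
From mathcomp Require Import ring zify.
Import GRing.Theory Num.Theory.

Lemma natmod_dvdz (M x y : nat) : x %% M = y %% M -> (M%:Z %| (x%:Z - y%:Z)%R)%Z.
Proof. by move=> H; rewrite -eqz_mod_dvd !modz_nat H. Qed.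

Lemma dvdz_natmod (M x y : nat) : (M%:Z %| (x%:Z - y%:Z)%R)%Z -> x %% M = y %% M.
Proof. by rewrite -eqz_mod_dvd !modz_nat => /eqP [] . Qed.

Lemma shift_ex (M p : nat) (x : 'I_M) (t : int) : (0 < p)%N -> (p %| M)%N ->
  exists y : 'I_M, y \in fiber M p x /\
     (M%:Z %| ((y : nat)%:Z - ((x : nat)%:Z + t * (M %/ p)%:Z))%R)%Z.
Proof.
move=> p0 pM.
have M0 : (0 < M)%N by case: x => x /=; case: (M) => //.
have tge : (0 <= (t %% p)%Z)%R by apply: modz_ge0; rewrite eqz_nat -lt0n.
have tlt : (absz (t %% p)%Z < p)%N.
  by rewrite -ltz_nat gez0_abs // ltz_pmod.
set tn := absz (t %% p)%Z.
exists (Ordinal (ltn_pmod (x + tn * (M %/ p)) M0)); split.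
  by rewrite inE; apply/existsP; exists (Ordinal tlt).
rewrite /=.
have -> : (((x + tn * (M %/ p)) %% M)%:Z - (x%:Z + t * (M %/ p)%:Z)
   = (((x + tn * (M %/ p)) %% M)%:Z - (x + tn * (M %/ p))%:Z)
     + (tn%:Z - t) * (M %/ p)%:Z)%R.
  rewrite PoszD PoszM; ring.
apply: rpredD.
  by apply: natmod_dvdz; rewrite modn_mod.
have -> : (tn%:Z - t = - (t %/ p)%Z * p%:Z)%R.
  rewrite /tn gez0_abs // {2}(divz_eq t p); ring.
rewrite -mulrA -PoszM mulnC divnK //.
exact: dvdz_mull (dvdzz _).
Qed.

Lemma fiber_grid (M p D : nat) (x y : 'I_M) : (D %| M %/ p)%N -> (D %| M)%N ->
  y \in fiber M p x -> y \in grid M D x.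
Proof.
move=> Dm DM; rewrite !inE => /existsP [t /eqP ->].
by rewrite modn_dvdm //; case/dvdnP: Dm => k ->; rewrite addnC mulnA modnMDl.
Qed.

Definition Dir (M : nat) (A B : {set 'I_M}) (kappa : 'I_M -> 'I_3) (P : int) (nu : 'I_3) :=
  exists a b : 'I_M, [/\ a \in A, b \in B,
     (M%:Z %| (P - ((a : nat)%:Z + (b : nat)%:Z))%R)%Z & kappa a = nu].

Lemma Dir_uniq M A B kappa P P' nu nu' : tiling M A B ->
  Dir M A B kappa P nu -> Dir M A B kappa P' nu' -> (M%:Z %| (P - P')%R)%Z -> nu = nu'.
Proof.
move=> ht [a [b [Ha Hb Hab <-]]] [a' [b' [Ha' Hb' Hab' <-]]] HP.
have M0 : (0 < M)%N := leq_ltn_trans (leq0n _) (ltn_ord a).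
have H : (a + b) %% M = (a' + b') %% M.
  apply: dvdz_natmod; rewrite !PoszD.
  have -> : ((a%:Z + b%:Z) - (a'%:Z + b'%:Z) =
     - (P - (a%:Z + b%:Z)) + (P - P') + (P' - (a'%:Z + b'%:Z)))%R by ring.
  by apply: rpredD; first apply: rpredD; rewrite ?rpredN.
move/forallP: ht => /(_ (Ordinal (ltn_pmod (a + b) M0))) /cards1P [x Hx].
have E1 : (a, b) \in [set x]. by rewrite -Hx inE /= Ha Hb eqxx.
have E2 : (a', b') \in [set x]. by rewrite -Hx inE /= Ha' Hb' H eqxx.
by move: E1 E2; rewrite !inE => /eqP <- /eqP [] ->.
Qed.

Lemma Dir_ex M A B kappa P : tiling M A B -> (0 < M)%N -> exists nu, Dir M A B kappa P nu.
Proof.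
move=> ht M0.
have Mz : (M%:Z != 0)%R by rewrite eqz_nat -lt0n.
have tge : (0 <= (P %% M)%Z)%R by apply: modz_ge0.
have tlt : (absz (P %% M)%Z < M)%N by rewrite -ltz_nat gez0_abs // ltz_pmod.
move/forallP: ht => /(_ (Ordinal tlt)) /cards1P [[a b] Hx].
have : (a, b) \in [set (a, b)] by rewrite inE.
rewrite -Hx inE /= => /and3P [Ha Hb /eqP Habs].
exists (kappa a), a, b; split => //.
rewrite -eqz_mod_dvd; apply/eqP.
by rewrite -PoszD modz_nat Habs gez0_abs.
Qed.

Lemma Dir_shift M D (q : 'I_3 -> nat) A B kappa P nu (t : int) :
  kappa_spec M D q A kappa -> (0 < q nu)%N -> (q nu %| M)%N ->
  (D %| M %/ q nu)%N -> (D %| M)%N ->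
  Dir M A B kappa P nu -> Dir M A B kappa (P + t * (M %/ q nu)%:Z)%R nu.
Proof.
move=> [hk1 hk2] q0 qM Dm DM [a [b [Ha Hb Hab Hk]]].
have [y [Hy Hyd]] := @shift_ex M (q nu) a t q0 qM.
have aA : a \in A :&: grid M D a by rewrite !inE Ha eqxx.
have := hk2 a Ha; rewrite Hk => /forallP /(_ a) /implyP /(_ aA) /subsetP /(_ y Hy).
rewrite inE => /andP [yA yg].
exists y, b; split => //; last by rewrite -(hk1 a y Ha yA yg).
have -> : (P + t * (M %/ q nu)%:Z - (y%:Z + b%:Z) =
   (P - (a%:Z + b%:Z)) - (y%:Z - (a%:Z + t * (M %/ q nu)%:Z)))%R by ring.
exact: rpredB.
Qed.

Lemma decomp (D p0 p1 p2 : nat) (w : int) : prime p0 -> prime p1 -> prime p2 ->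
  p0 != p1 -> p0 != p2 -> p1 != p2 -> (D%:Z %| w)%Z ->
  exists s t u : int, w = (s * (D * (p1 * p2))%:Z + t * (D * (p0 * p2))%:Z
                           + u * (D * (p0 * p1))%:Z)%R.
Proof.
move=> P0 P1 P2 n01 n02 n12 /dvdzP [c ->].
have c0 : coprime p0 (p1 * p2).
  by rewrite coprimeMr !prime_coprime // !dvdn_prime2 // n01 n02.
have c1 : coprime p1 p2 by rewrite prime_coprime // dvdn_prime2.
have /coprimezP [[u v] /= Huv] : coprimez p0%:Z (p1 * p2)%:Z by [].
have /coprimezP [[x y] /= Hxy] : coprimez p1%:Z p2%:Z by [].
exists (c * v)%R, (c * u * y)%R, (c * u * x)%R.
rewrite !PoszM.
have -> : (c * D%:Z = c * D%:Z * (u * p0%:Z * (x * p1%:Z + y * p2%:Z) + v * (p1%:Z * p2%:Z)))%R.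
  by rewrite Hxy mulr1 -PoszM Huv mulr1.
ring.
Qed.

Lemma ord3P (x : 'I_3) : [\/ x = d0, x = d1 | x = d2].
Proof.
case: x => [[|[|[|k]]] Hk]; [constructor 1|constructor 2|constructor 3|by []];
  exact: val_inj.
Qed.

Lemma ordmod M (w : 'I_M) n : nat_of_ord w = n %% M -> (M%:Z %| (w%:Z - n%:Z)%R)%Z.
Proof. by move=> H; apply: natmod_dvdz; rewrite H modn_mod. Qed.

Lemma gridP M D (z0 z : 'I_M) : (z \in grid M D z0) = (D%:Z %| (z%:Z - z0%:Z)%R)%Z.
Proof. by rewrite inE -eqz_mod_dvd !modz_nat eqz_nat eq_sym. Qed.

Lemma SigP M A B Z a : a \in SigmaA M A B Z -> a \in A /\
  exists b z : 'I_M, [/\ b \in B, z \in Z & (M%:Z %| (z%:Z - (a%:Z + b%:Z))%R)%Z].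
Proof.
rewrite inE => /andP [aA /existsP [b /andP [bB /existsP [z /andP [zZ /eqP Hz]]]]].
split=> //; exists b, z; split=> //.
by rewrite -PoszD; apply: ordmod.
Qed.

Lemma Sig_sub M A B (Z1 Z2 : {set 'I_M}) : Z1 \subset Z2 -> SigmaA M A B Z1 \subset SigmaA M A B Z2.
Proof.
move=> /subsetP S; apply/subsetP => a; rewrite !inE => /andP [-> /existsP [b /andP [bB /existsP [z /andP [zZ Hz]]]]].
by apply/existsP; exists b; rewrite bB; apply/existsP; exists z; rewrite S.
Qed.

Lemma fullfib_kappa M D (q : 'I_3 -> nat) A kappa a :
  kappa_spec M D q A kappa -> a \in A -> a \in fullfib M (q (kappa a)) A.
Proof.
move=> [_ hk2] aA; rewrite inE aA /=.
have aA' : a \in A :&: grid M D a by rewrite !inE aA eqxx.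
have := hk2 a aA => /forallP /(_ a) /implyP /(_ aA') /subsetP S.
by apply/subsetP => y /S; rewrite inE => /andP [].
Qed.

Lemma Dir_full M D (q : 'I_3 -> nat) (A B : {set 'I_M}) kappa P (a b : 'I_M) p (s : int) :
  kappa_spec M D q A kappa -> a \in A -> b \in B ->
  (M%:Z %| (P - (a%:Z + b%:Z))%R)%Z -> (0 < p)%N -> (p %| M)%N ->
  (D %| M %/ p)%N -> (D %| M)%N -> fiber M p a \subset A ->
  Dir M A B kappa (P + s * (M %/ p)%:Z)%R (kappa a).
Proof.
move=> [hk1 _] aA bB Hab p0 pM Dm DM /subsetP F.
have [y [Hy Hyd]] := @shift_ex M p a s p0 pM.
have yA := F y Hy.
have yg := @fiber_grid M p D a y Dm DM Hy.
exists y, b; split => //; last by rewrite (hk1 a y aA yA yg).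
have -> : (P + s * (M %/ p)%:Z - (y%:Z + b%:Z) =
   (P - (a%:Z + b%:Z)) - (y%:Z - (a%:Z + s * (M %/ p)%:Z)))%R by ring.
exact: rpredB.
Qed.

Arguments SigP {M A B Z a}.
Arguments ordmod {M w n}.

Theorem lemma7p4
  (q n : 'I_3 -> nat) (M : nat)
  (hprime : forall t, prime (q t)) (hinj : injective q)
  (hn : forall t, 0 < n t)
  (hM : M = q d0 ^ n d0 * q d1 ^ n d1 * q d2 ^ n d2)
  (A B : {set 'I_M})
  (htile : tiling M A B)
  (hPhi : dvdp 'Phi_M (maskpoly M A))
  (hfib : fibered_on_grids M (M %/ (q d0 * q d1 * q d2)) q A)
  (kappa : 'I_M -> 'I_3)
  (hkappa : kappa_spec M (M %/ (q d0 * q d1 * q d2)) q A kappa)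
  (z0 : 'I_M) :
  let D := M %/ (q d0 * q d1 * q d2) in
  let Lam := grid M D z0 in
  let Sig := SigmaA M A B Lam in
  let I3 := fullfib M (q d0) A :&: fullfib M (q d1) A :&: fullfib M (q d2) A in
  (* (i) *)
  ((exists2 a, a \in Sig :&: I3 & kappa a = d0) ->
     (forall a', a' \in Sig -> kappa a' = d0) /\ Sig \subset fullfib M (q d0) A)
  /\
  (* (ii) *)
  (Sig :&: I3 = set0 ->
     (exists S : {set 'I_3}, #|S| <= 2 /\ forall a, a \in Sig -> kappa a \in S) /\
     (exists mu1 mu2 : 'I_3,
        Sig \subset fullfib M (q mu1) A :|: fullfib M (q mu2) A))
  /\
  (* (iii) *)
  (forall mi mj mk : 'I_3, mi != mj -> mj != mk -> mi != mk ->
     Sig :&: I3 = set0 ->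
     (forall a, a \in Sig -> (kappa a == mi) || (kappa a == mj)) ->
     forall v, v < q mk ->
       exists lam : 'I_3, (lam == mi) || (lam == mj) /\
         forall a, a \in SigmaA M A B
                     (Fsum M (q mj) (Fsum M (q mi) (pt M (z0 + v * (M %/ q mk))))) ->
                   kappa a = lam).
Proof.
move=> D Lam Sig I3.
have q0 : forall t, (0 < q t)%N := fun t => prime_gt0 (hprime t).
have M0 : (0 < M)%N by rewrite hM !muln_gt0 !expn_gt0 !q0.
have n01 : q d0 != q d1 by apply/eqP => /hinj /(congr1 val).
have n02 : q d0 != q d2 by apply/eqP => /hinj /(congr1 val).
have n12 : q d1 != q d2 by apply/eqP => /hinj /(congr1 val).
have PM : (q d0 * q d1 * q d2 %| M)%N.
  by rewrite hM; apply: dvdn_mul; [apply: dvdn_mul|];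
     apply: dvdn_exp (hn _) (dvdnn _).
have HMD : M = (D * (q d0 * q d1 * q d2))%N.
  rewrite /D; apply/esym; exact: divnK.
have DM : (D %| M)%N by rewrite {1}HMD dvdn_mulr.
have hm0 : (M %/ q d0 = D * (q d1 * q d2))%N.
  rewrite {1}HMD (_ : (D * _ = D * (q d1 * q d2) * q d0)%N) ?mulnK //; ring.
have hm1 : (M %/ q d1 = D * (q d0 * q d2))%N.
  rewrite {1}HMD (_ : (D * _ = D * (q d0 * q d2) * q d1)%N) ?mulnK //; ring.
have hm2 : (M %/ q d2 = D * (q d0 * q d1))%N.
  rewrite {1}HMD (_ : (D * _ = D * (q d0 * q d1) * q d2)%N) ?mulnK //; ring.
have hq : forall nu, [/\ (0 < q nu)%N, (q nu %| M)%N & (D %| M %/ q nu)%N].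
  move=> nu; split => //.
    apply: dvdn_trans PM; case: (ord3P nu) => ->;
      [do 2 apply: dvdn_mulr | apply: dvdn_mulr; apply: dvdn_mull | apply: dvdn_mull];
      exact: dvdnn.
  by case: (ord3P nu) => ->; rewrite ?hm0 ?hm1 ?hm2; apply: dvdn_mulr.
have FD : forall P nu (t : int), Dir M A B kappa P nu ->
    Dir M A B kappa (P + t * (M %/ q nu)%:Z)%R nu.
  by move=> P nu t; case: (hq nu) => h1 h2 h3; exact: (@Dir_shift M D q A B kappa P nu t hkappa h1 h2 h3 DM).
have UQ : forall P P' nu nu', Dir M A B kappa P nu -> Dir M A B kappa P' nu' ->
    (M%:Z %| (P - P')%R)%Z -> nu = nu'.
  by move=> P P' nu nu'; apply: Dir_uniq.
set m0 := Posz (M %/ q d0).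
set m1 := Posz (M %/ q d1).
set m2 := Posz (M %/ q d2).
have Dec : forall w : int, (D%:Z %| w)%Z -> exists s t u : int,
    w = (s * m0 + t * m1 + u * m2)%R.
  move=> w Hw; have := @decomp D (q d0) (q d1) (q d2) w (hprime d0) (hprime d1) (hprime d2) n01 n02 n12 Hw.
  by rewrite /m0 /m1 /m2 hm0 hm1 hm2.
have SigD : forall a, a \in Sig -> exists z : 'I_M,
    Dir M A B kappa z%:Z (kappa a) /\ (D%:Z %| (z%:Z - z0%:Z)%R)%Z.
  move=> a /SigP [aA [b [z [bB zL Hz]]]].
  exists z; split; first by exists a, b.
  by rewrite -gridP.
have Dsub : forall z z' : 'I_M, (D%:Z %| (z%:Z - z0%:Z)%R)%Z ->
    (D%:Z %| (z'%:Z - z0%:Z)%R)%Z -> (D%:Z %| (z'%:Z - z%:Z)%R)%Z.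
  move=> z z' H1 H2.
  have -> : (z'%:Z - z%:Z = (z'%:Z - z0%:Z) - (z%:Z - z0%:Z))%R by ring.
  exact: rpredB.
have EQ : forall X Y : int, X = Y -> (M%:Z %| (X - Y)%R)%Z.
  by move=> X Y ->; rewrite subrr dvdz0.
have FK : forall a, a \in A -> a \in fullfib M (q (kappa a)) A.
  by move=> a aA; exact: (@fullfib_kappa M D q A kappa a hkappa aA).
split.
  case=> a /setIP [aS aI] ka.
  move: aI => /setIP [/setIP [F0 F1] F2].
  move: F1 F2; rewrite !inE => /andP [_ F1] /andP [_ F2].
  have [aA [b [z [bB zL Hz]]]] := SigP aS.
  have zG : (D%:Z %| (z%:Z - z0%:Z)%R)%Z by rewrite -gridP.
  have C1 : forall s t : int, Dir M A B kappa (z%:Z + s * m1 + t * m0)%R d0.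
    move=> s t; apply: FD; rewrite -ka.
    case: (hq d1) => h1 h2 h3.
    exact: (@Dir_full M D q A B kappa z a b (q d1) s hkappa aA bB Hz h1 h2 h3 DM F1).
  have C2 : forall s t : int, Dir M A B kappa (z%:Z + s * m2 + t * m0)%R d0.
    move=> s t; apply: FD; rewrite -ka.
    case: (hq d2) => h1 h2 h3.
    exact: (@Dir_full M D q A B kappa z a b (q d2) s hkappa aA bB Hz h1 h2 h3 DM F2).
  have Hall : forall a', a' \in Sig -> kappa a' = d0.
    move=> a' a'S.
    have [z' [Dz' Gz']] := SigD a' a'S.
    have [s [t [u Hw]]] := Dec _ (Dsub _ _ zG Gz').
    have Hz' : (z'%:Z = z%:Z + (s * m0 + t * m1 + u * m2))%R by rewrite -Hw addrC subrK.
    case: (ord3P (kappa a')) => E; rewrite E in Dz' |- * => //.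
    { have Dd := FD _ _ (- t)%R Dz'.
      apply: (UQ _ _ _ _ Dd (C2 u s)); apply: EQ.
      by rewrite Hz' /m0 /m1 /m2; ring. }
    { have Dd := FD _ _ (- u)%R Dz'.
      apply: (UQ _ _ _ _ Dd (C1 t s)); apply: EQ.
      by rewrite Hz' /m0 /m1 /m2; ring. }
  split; first exact: Hall.
  apply/subsetP => a' a'S; rewrite -(Hall a' a'S).
  by apply: FK; case: (SigP a'S).
split.
  move=> _.
  have K3 : forall a1 a2 a3, a1 \in Sig -> a2 \in Sig -> a3 \in Sig ->
      kappa a1 = d0 -> kappa a2 = d1 -> kappa a3 = d2 -> False.
    move=> a1 a2 a3 H1 H2 H3 k1 k2 k3.
    have [z1 [Dz1 G1]] := SigD a1 H1; rewrite k1 in Dz1.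
    have [z2 [Dz2 G2]] := SigD a2 H2; rewrite k2 in Dz2.
    have [z3 [Dz3 G3]] := SigD a3 H3; rewrite k3 in Dz3.
    have [e0 [e1 [e2 He]]] := Dec _ (Dsub _ _ G2 G1).
    have [c0 [c1 [c2 Hc]]] := Dec _ (Dsub _ _ G2 G3).
    have Hz1 : (z1%:Z = z2%:Z + (e0 * m0 + e1 * m1 + e2 * m2))%R by rewrite -He addrC subrK.
    have Hz3 : (z3%:Z = z2%:Z + (c0 * m0 + c1 * m1 + c2 * m2))%R by rewrite -Hc addrC subrK.
    have DA := FD _ _ e1 Dz2.
    have DC := FD _ _ (- c2)%R Dz3.
    have [nu Dn] := @Dir_ex M A B kappa (z2%:Z + e1 * m1 + c0 * m0)%R htile M0.
    case: (ord3P nu) => E; rewrite E in Dn.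
    { have Dd := FD _ _ (- c0)%R Dn.
      have : d0 = d1.
        apply: (UQ _ _ _ _ Dd DA); apply: EQ.
        by rewrite /m0 /m1 /m2; ring.
      by move/(congr1 val). }
    { have Dd := FD _ _ (c1 - e1)%R Dn.
      have : d1 = d2.
        apply: (UQ _ _ _ _ Dd DC); apply: EQ.
        by rewrite Hz3 /m0 /m1 /m2; ring.
      by move/(congr1 val). }
    { have Dd := FD _ _ e2 Dn.
      have Dd' := FD _ _ (c0 - e0)%R Dz1.
      have : d2 = d0.
        apply: (UQ _ _ _ _ Dd Dd'); apply: EQ.
        by rewrite Hz1 /m0 /m1 /m2; ring.
      by move/(congr1 val). }
  have [nu Hnu] : exists nu, forall a, a \in Sig -> kappa a != nu.
    case: (boolP [exists a in Sig, kappa a == d0]); last first.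
      by move/existsPn => H; exists d0 => a aS; move: (H a); rewrite aS.
    case/existsP => a1 /andP [H1 /eqP k1].
    case: (boolP [exists a in Sig, kappa a == d1]); last first.
      by move/existsPn => H; exists d1 => a aS; move: (H a); rewrite aS.
    case/existsP => a2 /andP [H2 /eqP k2].
    case: (boolP [exists a in Sig, kappa a == d2]); last first.
      by move/existsPn => H; exists d2 => a aS; move: (H a); rewrite aS.
    case/existsP => a3 /andP [H3 /eqP k3].
    by case: (K3 a1 a2 a3 H1 H2 H3 k1 k2 k3).
  split.
    exists (~: [set nu]); split; first by rewrite cardsC1 card_ord.
    by move=> a aS; rewrite !inE Hnu.
  have [mu1 [mu2 Hmu]] : exists mu1 mu2 : 'I_3,
      forall x : 'I_3, x != nu -> x = mu1 \/ x = mu2.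
    case: (ord3P nu) => ->; [exists d1, d2 | exists d0, d2 | exists d0, d1];
      move=> x; case: (ord3P x) => -> //; rewrite ?eqxx //; auto.
  exists mu1, mu2; apply/subsetP => a aS.
  have aA : a \in A by case: (SigP aS).
  by case: (Hmu _ (Hnu a aS)) => E; rewrite inE -E FK ?orbT.
move=> mi mj mk nij njk nik _ Hk v vlt.
set W := Fsum M (q mj) (Fsum M (q mi) (pt M (z0 + v * (M %/ q mk)))).
set mi' := Posz (M %/ q mi).
set mj' := Posz (M %/ q mj).
set mk' := Posz (M %/ q mk).
have WL : forall w : 'I_M, w \in W -> exists s t : int,
   (M%:Z %| (w%:Z - (z0%:Z + v%:Z * mk' + s * mi' + t * mj'))%R)%Z.
  move=> w; rewrite inE => /existsP [x /andP [xY]]; rewrite inE => /existsP [t /eqP Hw].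
  move: xY; rewrite inE => /existsP [y /andP [yP]]; rewrite inE => /existsP [s /eqP Hx].
  move: yP; rewrite inE => /eqP Hy.
  exists (Posz s), (Posz t).
  have := ordmod Hw; have := ordmod Hx; have := ordmod Hy.
  rewrite !PoszD !PoszM => h1 h2 h3.
  have -> : (w%:Z - (z0%:Z + v%:Z * mk' + (s : nat)%:Z * mi' + (t : nat)%:Z * mj') =
     (w%:Z - (x%:Z + (t : nat)%:Z * mj')) + (x%:Z - (y%:Z + (s : nat)%:Z * mi'))
     + (y%:Z - (z0%:Z + v%:Z * mk')))%R.
    by rewrite /mi' /mj' /mk'; ring.
  by apply: rpredD; first apply: rpredD.
have DMz : (D%:Z %| M%:Z)%Z := DM.
have Dmz : forall nu, (D%:Z %| Posz (M %/ q nu))%Z by move=> nu; case: (hq nu).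
have WLam : W \subset Lam.
  apply/subsetP => w wW; rewrite gridP.
  have [s [t h]] := WL w wW.
  have -> : (w%:Z - z0%:Z = (w%:Z - (z0%:Z + v%:Z * mk' + s * mi' + t * mj'))
      + v%:Z * mk' + s * mi' + t * mj')%R by ring.
  apply: rpredD; [apply: rpredD; [apply: rpredD|]|];
    first exact: dvdz_trans DMz h; apply: dvdz_mull; exact: Dmz.
have SS : SigmaA M A B W \subset Sig by apply: Sig_sub.
have Contra : forall a1 a2, a1 \in SigmaA M A B W -> a2 \in SigmaA M A B W ->
    kappa a1 = mi -> kappa a2 = mj -> False.
  move=> a1 a2 /SigP [a1A [b1 [w1 [b1B w1W Hw1]]]] /SigP [a2A [b2 [w2 [b2B w2W Hw2]]]] k1 k2.
  have Dw1 : Dir M A B kappa w1%:Z mi by rewrite -k1; exists a1, b1.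
  have Dw2 : Dir M A B kappa w2%:Z mj by rewrite -k2; exists a2, b2.
  have [s1 [t1 h1]] := WL w1 w1W.
  have [s2 [t2 h2]] := WL w2 w2W.
  have Dd1 := FD _ _ (s2 - s1)%R Dw1.
  have Dd2 := FD _ _ (t1 - t2)%R Dw2.
  have E : mi = mj.
    apply: (UQ _ _ _ _ Dd1 Dd2).
    have -> : (w1%:Z + (s2 - s1) * mi' - (w2%:Z + (t1 - t2) * mj') =
       (w1%:Z - (z0%:Z + v%:Z * mk' + s1 * mi' + t1 * mj'))
       - (w2%:Z - (z0%:Z + v%:Z * mk' + s2 * mi' + t2 * mj')))%R by ring.
    exact: rpredB.
  by rewrite E eqxx in nij.
case: (set_0Vmem (SigmaA M A B W)) => [E | [a aW]].
  exists mi; split; first by rewrite eqxx.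
  by move=> a; rewrite E inE.
exists (kappa a); split; first exact: Hk (subsetP SS a aW).
move=> a' a'W.
case/orP: (Hk a (subsetP SS a aW)) => /eqP ka; case/orP: (Hk a' (subsetP SS a' a'W)) => /eqP ka';
  rewrite ka ka' //.
  by case: (Contra a a' aW a'W ka ka').
by case: (Contra a' a a'W aW ka' ka).
Qed.
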